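(* Let $w$ be well-ordering on an interval $I$, $n\in\mathbb N$, and $A\subset\{1,\dots,2n\}$ with $|A|=n$ and $\max f_A\ge1$. Let $\ell_1<\dots<\ell_m$ be the integers $k\in\{1,\dots,2n\}$ with $f_A(k)=\max f_A$ (so $\ell_m<2n$), and set $B(A)=\big(A\cup\{\ell_j+1\}_{j=1}^m\big)\setminus\{\ell_j\}_{j=1}^m$. If $\mathrm{Osc}(f_A)\ge2$, then $\mathrm{Osc}(f_{B(A)})<\mathrm{Osc}(f_A)$. Moreover, for all $x_1\le x_2\le\dots\le x_{2n}$ in $I$, $c_n(x_{B(A)})+c_n(x_{B(A)^c})\le c_n(x_A)+c_n(x_{A^c}),$ and if $w$ is strictly well-ordering and $c_n(x_{B(A)})+c_n(x_{B(A)^c})<\infty$, equality holds if and only if $\sum_{k\in A}\delta_{x_k}=\sum_{k\in B(A)}\delta_{x_k}$ or $\sum_{k\in A}\delta_{x_k}=\sum_{k\in B(A)^c}\delta_{x_k}$.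
   Context: For $A\subset\{1,\dots,2n\}$ with $|A|=n$: $A^c=\{1,\dots,2n\}\setminus A$, $\mu_A=\sum_{j\in A}\delta_j-\sum_{j\in A^c}\delta_j$, $f_A(t)=\mu_A([0,t])$ for $t\in\mathbb R$ (the cumulative function; integer-valued, vanishes for $t<1$ and $t\ge2n$), and $\mathrm{Osc}(f_A)=\max f_A-\min f_A$. $c_n(y)=\sum_{i\ne j}w(y_i,y_j)$; $x_B=(x_{b})_{b\in B}$ in increasing order of indices. Well-ordering: $w$ continuous symmetric with, for $y_1\le y_2\le y_3\le y_4$ in $I$, $w(y_1,y_3)+w(y_2,y_4)=\min_\sigma[w(y_{\sigma(1)},y_{\sigma(2)})+w(y_{\sigma(3)},y_{\sigma(4)})]$ over permutations of $\{1,2,3,4\}$; strictly well-ordering: equality for a given $\sigma$ only if the sum is $\infty$ or $\delta_{y_1}+\delta_{y_3}\in\{\delta_{y_{\sigma(1)}}+\delta_{y_{\sigma(2)}},\delta_{y_{\sigma(3)}}+\delta_{y_{\sigma(4)}}\}$. *)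

(* Defs.v *)
From HB Require Import structures.
From mathcomp Require Import all_boot all_order all_algebra all_fingroup.
From mathcomp Require Import all_classical all_reals all_analysis.
Set Implicit Arguments. Unset Strict Implicit. Unset Printing Implicit Defensive.
Import Order.TTheory GRing.Theory Num.Theory numFieldNormedType.Exports.
Local Open Scope classical_set_scope.
Local Open Scope ring_scope.

Section Defs.
Context {R : realType}.

Definition w_continuous (I : interval R) (w : R -> R -> \bar R) :=
  {within [set p : R * R | p.1 \in I /\ p.2 \in I],
     continuous (fun p : R * R => w p.1 p.2)}.

Definition w_symmetric (I : interval R) (w : R -> R -> \bar R) :=
  forall x y, x \in I -> y \in I -> w x y = w y x.

Definition tup4 (y1 y2 y3 y4 : R) : 4.-tuple R := [tuple y1; y2; y3; y4].

Definition pair_cost (w : R -> R -> \bar R) (y : 4.-tuple R) (s : 'S_4) : \bar R :=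
  (w (tnth y (s (inord 0))) (tnth y (s (inord 1))) +
   w (tnth y (s (inord 2))) (tnth y (s (inord 3))))%E.

Definition well_ordering (I : interval R) (w : R -> R -> \bar R) :=
  [/\ w_continuous I w, w_symmetric I w &
   forall y1 y2 y3 y4 : R, y1 \in I -> y2 \in I -> y3 \in I -> y4 \in I ->
     y1 <= y2 -> y2 <= y3 -> y3 <= y4 ->
     (w y1 y3 + w y2 y4)%E =
       \big[mine/+oo%E]_(s : 'S_4) pair_cost w (tup4 y1 y2 y3 y4) s].

(* finite sum of Dirac masses sum_{t in s} delta_t, represented by its
   point-mass (counting) function *)
Definition diracs (s : seq R) : R -> nat := fun t => count_mem t s.

Definition strictly_well_ordering (I : interval R) (w : R -> R -> \bar R) :=
  well_ordering I w /\
  forall y1 y2 y3 y4 : R, y1 \in I -> y2 \in I -> y3 \in I -> y4 \in I ->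
    y1 <= y2 -> y2 <= y3 -> y3 <= y4 ->
    forall s : 'S_4,
      let y := tup4 y1 y2 y3 y4 in
      (w y1 y3 + w y2 y4)%E = pair_cost w y s ->
      (w y1 y3 + w y2 y4)%E = +oo%E \/
      diracs [:: y1; y3] = diracs [:: tnth y (s (inord 0)); tnth y (s (inord 1))] \/
      diracs [:: y1; y3] = diracs [:: tnth y (s (inord 2)); tnth y (s (inord 3))].

Definition cost (w : R -> R -> \bar R) (y : seq R) : \bar R :=
  (\sum_(i < size y) \sum_(j < size y | i != j) w (nth 0%R y i) (nth 0%R y j))%E.

(* Index convention: the point j+1 of {1,..,2n} is represented by j : 'I_(2*n). *)

Definition fA (n : nat) (A : {set 'I_(2 * n)}) (t : R) : R :=
  \sum_(j < 2 * n | (j.+1)%:R <= t) (if j \in A then 1 else -1).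

Definition fmax (f : R -> R) : R := sup (range f).
Definition fmin (f : R -> R) : R := inf (range f).
Definition Osc (f : R -> R) : R := fmax f - fmin f.

Definition Lset (n : nat) (A : {set 'I_(2 * n)}) : {set 'I_(2 * n)} :=
  [set j : 'I_(2 * n) | fA A (j.+1)%:R == fmax (fA A)].

(* the points l+1 (l in {1,..,2n}, f_A(l) = max f_A), as indices:
   index j represents j+1 = l+1, i.e. l = j *)
Definition Lset_succ (n : nat) (A : {set 'I_(2 * n)}) : {set 'I_(2 * n)} :=
  [set j : 'I_(2 * n) | (0 < j)%N && (fA A (j%:R) == fmax (fA A))].

Definition BA (n : nat) (A : {set 'I_(2 * n)}) : {set 'I_(2 * n)} :=
  (A :|: Lset_succ A) :\: Lset A.

Definition xsub (n : nat) (x : 'I_(2 * n) -> R) (B : {set 'I_(2 * n)}) : seq R :=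
  [seq x i | i <- enum B].

End Defs.

(* Main.v *)
Require Import Defs.
From HB Require Import structures.
From mathcomp Require Import all_boot all_order all_algebra all_fingroup.
From mathcomp Require Import all_classical all_reals all_analysis.
From mathcomp Require Import zify ring lra.
Import Order.TTheory GRing.Theory Num.Theory numFieldNormedType.Exports.
Local Open Scope ring_scope.
Set Implicit Arguments. Unset Strict Implicit.

Section Abstract.
Variables (R : realType) (T : eqType) (sg : pred T) (a b : T -> \bar R).

Lemma decomp_u (u : seq T) (x : T) : ~~ all sg (x :: u) -> sg (last x u) ->
  exists u1 u2 k' k, x :: u = u1 ++ k' :: k :: u2 /\ ~~ sg k' /\ sg k.
Proof.
elim: u x => [|y u IH] x /=.
  by rewrite ?andbT => /negP.
case Hall: (all sg (y :: u)).
  move: Hall => /= /andP[sy au]; rewrite sy au /= ?andbT => nsx _.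
  by exists [::], u, x, y.
move=> _ hl; have [u1 [u2 [k' [k [E [H1 H2]]]]]] := IH y (negbT Hall) hl.
by exists (x :: u1), u2, k', k; rewrite E.
Qed.

Lemma decomp_v (v : seq T) (x : T) : ~~ sg x -> ~~ all (predC sg) (x :: v) ->
  exists v1 v2 k' k, x :: v = v1 ++ k' :: k :: v2 /\ ~~ sg k' /\ sg k.
Proof.
elim: v x => [|y v IH] x nx /=; first by rewrite nx.
case sy: (sg y).
  by move=> _; exists [::], v, x, y.
rewrite /= nx /= => Hall.
have Hall' : ~~ all (predC sg) (y :: v) by rewrite /= sy.
have [v1 [v2 [k' [k [E [H1 H2]]]]]] := IH y (negbT sy) Hall'.
by exists (x :: v1), v2, k', k; rewrite E.
Qed.

Definition Cu (u : seq T) := forall m, (count (predC sg) (drop m u) <= count sg (drop m u))%N.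
Definition Cv (v : seq T) := forall m, (count sg (take m v) <= count (predC sg) (take m v))%N.

Lemma Cu_rem u1 u2 k' k : ~~ sg k' -> sg k -> Cu (u1 ++ k' :: k :: u2) -> Cu (u1 ++ u2).
Proof.
move=> nk sk H m; case: (ltnP m (size u1)) => hm.
  have := H m; rewrite !drop_cat hm !count_cat /= sk (negbTE nk) /=; lia.
have := H m.+2; rewrite !drop_cat.
have -> : (m.+2 < size u1)%N = false by apply/negbTE; rewrite -leqNgt; lia.
have -> : (m < size u1)%N = false by apply/negbTE; rewrite -leqNgt; lia.
have -> : (m.+2 - size u1 = (m - size u1).+2)%N by lia.
by [].
Qed.

Lemma Cv_rem v1 v2 k' k : ~~ sg k' -> sg k -> Cv (v1 ++ k' :: k :: v2) -> Cv (v1 ++ v2).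
Proof.
move=> nk sk H m; case: (ltnP m (size v1)) => hm.
  by have := H m; rewrite !take_cat hm.
have := H m.+2; rewrite !take_cat.
have -> : (m.+2 < size v1)%N = false by apply/negbTE; rewrite -leqNgt; lia.
have -> : (m < size v1)%N = false by apply/negbTE; rewrite -leqNgt; lia.
have -> : (m.+2 - size v1 = (m - size v1).+2)%N by lia.
by rewrite /= !count_cat /= sk (negbTE nk) /=; lia.
Qed.

Definition Hadj (s : seq T) := forall k' k, subseq [:: k'; k] s -> ~~ sg k' -> sg k ->
  (b k' + b k <= a k' + a k)%E.
Definition Hcross (u v : seq T) := forall k k', k \in u -> k' \in v -> sg k -> ~~ sg k' ->
  (b k + b k' <= a k + a k')%E.

Lemma subseq_rem (u1 u2 : seq T) k' k : subseq (u1 ++ u2) (u1 ++ k' :: k :: u2).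
Proof.
apply: cat_subseq; first exact: subseq_refl.
by apply: (subseq_trans (suffix_subseq [:: k'; k] u2)); rewrite subseq_refl.
Qed.

Lemma subseq_adj (u1 u2 : seq T) k' k : subseq [:: k'; k] (u1 ++ k' :: k :: u2).
Proof.
apply: (subseq_trans _ (suffix_subseq u1 _)).
by rewrite -[[:: k'; k]]cats0; apply: (cat_subseq (subseq_refl _) (sub0seq u2)).
Qed.

Lemma Hadj_rem u1 u2 k' k : Hadj (u1 ++ k' :: k :: u2) -> Hadj (u1 ++ u2).
Proof. by move=> H x y sxy; apply: H; apply: subseq_trans sxy (subseq_rem _ _ _ _). Qed.

Lemma Hcross_reml u1 u2 k' k v : Hcross (u1 ++ k' :: k :: u2) v -> Hcross (u1 ++ u2) v.
Proof.
move=> H x y hx; apply: H; move: hx; rewrite !mem_cat !inE.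
by case/orP=> ->; rewrite ?orbT.
Qed.

Lemma Hcross_remr u v1 v2 k' k : Hcross u (v1 ++ k' :: k :: v2) -> Hcross u (v1 ++ v2).
Proof.
move=> H x y hx hy; apply: H => //; move: hy; rewrite !mem_cat !inE.
by case/orP=> ->; rewrite ?orbT.
Qed.

Lemma big_rem (f : T -> \bar R) u1 u2 k' k :
  (\sum_(i <- u1 ++ k' :: k :: u2) f i = (f k' + f k) + \sum_(i <- u1 ++ u2) f i)%E.
Proof.
rewrite (perm_big (k' :: k :: (u1 ++ u2))); last first.
  by rewrite -(cat1s k') -(cat1s k) !catA -!(catA u1) perm_catCA catA; rewrite perm_refl.
rewrite !big_cons -[in RHS]addeA. done.
Qed.

Lemma abs_le (u v : seq T) :
  Hadj u -> Hadj v -> Hcross u v -> Cu u -> Cv v ->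
  (count sg u + count sg v = count (predC sg) u + count (predC sg) v)%N ->
  (\sum_(k <- u) b k + \sum_(k <- v) b k <= \sum_(k <- u) a k + \sum_(k <- v) a k)%E.
Proof.
move: {2}(size u + size v)%N (leqnn (size u + size v)) => N.
elim: N u v => [|N IH] u v.
  by case: u => [|? ?] //; case: v => [|? ?] // _; rewrite !big_nil adde0 lexx.
move=> hsz Hu Hv Hc Cuu Cvv Ceq.
case: (boolP (all sg u)) => Au.
  case: (boolP (all (predC sg) v)) => Av.
    have : size u = size v.
      move: Ceq (count_predC sg u) (count_predC sg v).
      by move: (Au) (Av); rewrite !all_count => /eqP-> /eqP->; lia.
    move: Hc Au Av; clear; elim: u v => [|x u IH] [|y v] //= Hc.
      by rewrite !big_nil adde0 lexx.
    move=> /andP[sx Au] /andP[ny Av] [] hs.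
    rewrite !big_cons addeACA [(a x + _ + _)%E]addeACA.
    apply: leeD; first by apply: Hc; rewrite ?inE ?eqxx.
    apply: IH => //; move=> k k' hk hk'; apply: Hc; rewrite inE ?hk ?hk' orbT //.
  case: v Hv Hc Cvv Ceq hsz Av => [|y v] Hv Hc Cvv Ceq hsz Av; first by [].
  have ny : ~~ sg y by have := Cvv 1%N; rewrite /= take0 /=; case: (sg y).
  have [v1 [v2 [k' [k [E [nk sk]]]]]] := @decomp_v v y ny Av.
  rewrite E in Hv Hc Cvv Ceq hsz *.
  rewrite !big_rem addeCA [X in (_ <= X)%E]addeCA.
  apply: leeD; first by apply: Hv => //; apply: subseq_adj.
  apply: IH.
  - by move: hsz; rewrite !size_cat /=; lia.
  - exact: Hu.
  - exact: (Hadj_rem Hv).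
  - exact: (Hcross_remr Hc).
  - exact: Cuu.
  - exact: (Cv_rem nk sk Cvv).
  - by move: Ceq; rewrite !count_cat /= sk (negbTE nk) /=; lia.
case: u Hu Hc Cuu Ceq hsz Au => [|y u] Hu Hc Cuu Ceq hsz Au; first by [].
have sl : sg (last y u).
  have := Cuu (size u); rewrite (drop_nth y) ?size_cons // drop_oversize /= ?size_cons //.
  by rewrite nth_last /=; case: (sg (last y u)).
have [u1 [u2 [k' [k [E [nk sk]]]]]] := @decomp_u u y Au sl.
rewrite E in Hu Hc Cuu Ceq hsz *.
rewrite !big_rem -addeA -[X in (_ <= X)%E]addeA.
apply: leeD; first by apply: Hu => //; apply: subseq_adj.
apply: IH.
- by move: hsz; rewrite !size_cat /=; lia.
- exact: (Hadj_rem Hu).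
- exact: Hv.
- exact: (Hcross_reml Hc).
- exact: (Cu_rem nk sk Cuu).
- exact: Cvv.
- by move: Ceq; rewrite !count_cat /= sk (negbTE nk) /=; lia.
Qed.


Lemma nninf_add (x y : \bar R) : x != -oo%E -> y != -oo%E -> (x + y)%E != -oo%E.
Proof. by case: x => [x||] // ; case: y => [y||]. Qed.

Lemma nninf_sum (f : T -> \bar R) (s : seq T) : (forall k, f k != -oo%E) ->
  (\sum_(k <- s) f k)%E != -oo%E.
Proof.
move=> H; elim: s => [|x s IH]; first by rewrite big_nil.
by rewrite big_cons; apply: nninf_add.
Qed.

Lemma split_eq (x1 x2 y1 y2 : \bar R) : (x1 <= y1)%E -> (x2 <= y2)%E -> (x1 + x2 = y1 + y2)%E ->
  (x1 + x2 != +oo)%E -> x1 != -oo%E -> x2 != -oo%E -> y1 != -oo%E -> y2 != -oo%E ->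
  [/\ x1 = y1, x2 = y2, x1 != +oo%E & x2 != +oo%E].
Proof.
case: x1 => [r1||] //; case: x2 => [r2||] //; case: y1 => [s1||] //; case: y2 => [s2||] //.
rewrite !lee_fin => h1 h2 [] e _ _ _ _ _; split => //; congr (_%:E); lra.
Qed.

Variables (val : T -> R) (Q : Prop).

Definition Hadjs (s : seq T) := forall k' k, subseq [:: k'; k] s -> ~~ sg k' -> sg k ->
  (b k' + b k = a k' + a k)%E -> (b k' + b k != +oo)%E -> val k' = val k \/ Q.
Definition Hcrosss (u v : seq T) := forall k k', k \in u -> k' \in v -> sg k -> ~~ sg k' ->
  (b k + b k' = a k + a k')%E -> (b k + b k' != +oo)%E -> Q.

Lemma Hadjs_rem u1 u2 k' k : Hadjs (u1 ++ k' :: k :: u2) -> Hadjs (u1 ++ u2).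
Proof. by move=> H x y sxy; apply: H; apply: subseq_trans sxy (subseq_rem _ _ _ _). Qed.

Lemma Hcrosss_reml u1 u2 k' k v : Hcrosss (u1 ++ k' :: k :: u2) v -> Hcrosss (u1 ++ u2) v.
Proof.
move=> H x y hx; apply: H; move: hx; rewrite !mem_cat !inE.
by case/orP=> ->; rewrite ?orbT.
Qed.

Lemma Hcrosss_remr u v1 v2 k' k : Hcrosss u (v1 ++ k' :: k :: v2) -> Hcrosss u (v1 ++ v2).
Proof.
move=> H x y hx hy; apply: H => //; move: hy; rewrite !mem_cat !inE.
by case/orP=> ->; rewrite ?orbT.
Qed.

Definition Ceqv (s : seq T) := forall t, count (fun k => sg k && (val k == t)) s =
  count (fun k => ~~ sg k && (val k == t)) s.

Lemma abs_eq (u v : seq T) :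
  (forall k, b k != -oo%E) -> (forall k, a k != -oo%E) ->
  Hadj u -> Hadj v -> Hcross u v -> Hadjs u -> Hadjs v -> Hcrosss u v -> Cu u -> Cv v ->
  (count sg u + count sg v = count (predC sg) u + count (predC sg) v)%N ->
  (\sum_(k <- u) b k + \sum_(k <- v) b k = \sum_(k <- u) a k + \sum_(k <- v) a k)%E ->
  (\sum_(k <- u) b k + \sum_(k <- v) b k != +oo)%E ->
  Q \/ Ceqv (u ++ v).
Proof.
move=> Hb Ha; move: {2}(size u + size v)%N (leqnn (size u + size v)) => N.
elim: N u v => [|N IH] u v.
  by case: u => [|? ?] //; case: v => [|? ?] // _; right => t.
move=> hsz Hu Hv Hc Hus Hvs Hcs Cuu Cvv Ceq Heq Hfin.
case: (boolP (all sg u)) => Au.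
  case: (boolP (all (predC sg) v)) => Av.
    case: u Hu Hc Hus Hcs Cuu Ceq Heq Hfin hsz Au => [|x u] Hu Hc Hus Hcs Cuu Ceq Heq Hfin hsz Au.
      case: v Hv Hc Hvs Hcs Cvv Ceq Heq Hfin hsz Av => [|y v] Hv Hc Hvs Hcs Cvv Ceq Heq Hfin hsz Av.
        by right.
      rewrite (_ : count sg [::] = 0%N) // (_ : count (predC sg) [::] = 0%N) // in Ceq.
      move: Ceq (count_predC sg (y::v)) Av; rewrite all_count => Ceq Cp /eqP Av.
      by move: Cp Ceq; rewrite Av /=; lia.
    case: v Hv Hc Hvs Hcs Cvv Ceq Heq Hfin hsz Av => [|y v] Hv Hc Hvs Hcs Cvv Ceq Heq Hfin hsz Av.
      rewrite (_ : count sg [::] = 0%N) // (_ : count (predC sg) [::] = 0%N) // in Ceq.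
      move: Ceq (count_predC sg (x::u)) Au; rewrite all_count => Ceq Cp /eqP Au.
      by move: Cp Ceq; rewrite Au /=; lia.
    move: Au Av => /= /andP[sx Au] /andP[ny Av].
    move: Heq Hfin; rewrite !big_cons addeACA [X in (_ = X)%E]addeACA => Heq Hfin.
    have hrest : (\sum_(j <- u) b j + \sum_(j <- v) b j <= \sum_(j <- u) a j + \sum_(j <- v) a j)%E.
      apply: abs_le.
      - by move=> p q /(subseq_trans)/(_ (subseq_cons _ _))/Hu.
      - by move=> p q /(subseq_trans)/(_ (subseq_cons _ _))/Hv.
      - by move=> p q hp hq; apply: Hc; rewrite inE ?hp ?hq orbT.
      - by move=> m; move/allP: Au => Au; rewrite (eqP (_ : count (predC sg) (drop m u) == 0)%N) //;
           rewrite eqn0Ngt -has_count; apply/hasPn => z /mem_drop /Au /= ->.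
      - by move=> m; move/allP: Av => Av; rewrite (eqP (_ : count sg (take m v) == 0)%N) //;
           rewrite eqn0Ngt -has_count; apply/hasPn => z /mem_take /Av /=.
      - move: Ceq Au Av; rewrite /= sx (negbTE ny) /= !all_count => Ceq /eqP Au /eqP Av.
        have := count_predC sg u; have := count_predC sg v; lia.
    have [e1 _ f1 _] := split_eq (Hc x y (mem_head _ _) (mem_head _ _) sx ny) hrest Heq Hfin
      (nninf_add (Hb x) (Hb y)) (nninf_add (nninf_sum _ Hb) (nninf_sum _ Hb))
      (nninf_add (Ha x) (Ha y)) (nninf_add (nninf_sum _ Ha) (nninf_sum _ Ha)).
    by left; apply: (Hcs x y) => //; rewrite ?inE ?eqxx.
  case: v Hv Hc Hvs Hcs Cvv Ceq Heq Hfin hsz Av => [|y v] Hv Hc Hvs Hcs Cvv Ceq Heq Hfin hsz Av; first by [].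
  have ny : ~~ sg y by have := Cvv 1%N; rewrite /= take0 /=; case: (sg y).
  have [v1 [v2 [k' [k [E [nk sk]]]]]] := @decomp_v v y ny Av.
  rewrite E in Hv Hc Hvs Hcs Cvv Ceq Heq Hfin hsz *.
  move: Heq Hfin; rewrite !big_rem addeCA [X in (_ = X)%E]addeCA => Heq Hfin.
  have hrest := abs_le Hu (Hadj_rem Hv) (Hcross_remr Hc) Cuu (Cv_rem nk sk Cvv)
     (ltac:(by move: Ceq; rewrite !count_cat /= sk (negbTE nk) /=; lia)).
  have [e1 e2 f1 f2] := split_eq (Hv k' k (subseq_adj _ _ _ _) nk sk) hrest Heq Hfin
      (nninf_add (Hb k') (Hb k)) (nninf_add (nninf_sum _ Hb) (nninf_sum _ Hb))
      (nninf_add (Ha k') (Ha k)) (nninf_add (nninf_sum _ Ha) (nninf_sum _ Ha)).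
  have [ev|] := Hvs k' k (subseq_adj _ _ _ _) nk sk e1 f1; last by left.
  have hsz' : (size u + size (v1 ++ v2) <= N)%N by move: hsz; rewrite !size_cat /=; lia.
  have Ceq' : (count sg u + count sg (v1 ++ v2) = count (predC sg) u + count (predC sg) (v1 ++ v2))%N.
    by move: Ceq; rewrite !count_cat /= sk (negbTE nk) /=; lia.
  case: (IH u (v1 ++ v2) hsz' Hu (Hadj_rem Hv) (Hcross_remr Hc) Hus (Hadjs_rem Hvs)
    (Hcrosss_remr Hcs) Cuu (Cv_rem nk sk Cvv) Ceq' e2 f2); first by left.
  move=> C; right => t; have := C t; rewrite !count_cat /= sk (negbTE nk) ev /=; lia.
case: u Hu Hc Hus Hcs Cuu Ceq Heq Hfin hsz Au => [|y u] Hu Hc Hus Hcs Cuu Ceq Heq Hfin hsz Au; first by [].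
have sl : sg (last y u).
  have := Cuu (size u); rewrite (drop_nth y) ?size_cons // drop_oversize /= ?size_cons //.
  by rewrite nth_last /=; case: (sg (last y u)).
have [u1 [u2 [k' [k [E [nk sk]]]]]] := @decomp_u u y Au sl.
rewrite E in Hu Hc Hus Hcs Cuu Ceq Heq Hfin hsz *.
move: Heq Hfin; rewrite !big_rem -addeA -[X in (_ = X)%E]addeA => Heq Hfin.
have hrest := abs_le (Hadj_rem Hu) Hv (Hcross_reml Hc) (Cu_rem nk sk Cuu) Cvv
   (ltac:(by move: Ceq; rewrite !count_cat /= sk (negbTE nk) /=; lia)).
have [e1 e2 f1 f2] := split_eq (Hu k' k (subseq_adj _ _ _ _) nk sk) hrest Heq Hfin
    (nninf_add (Hb k') (Hb k)) (nninf_add (nninf_sum _ Hb) (nninf_sum _ Hb))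
    (nninf_add (Ha k') (Ha k)) (nninf_add (nninf_sum _ Ha) (nninf_sum _ Ha)).
have [ev|] := Hus k' k (subseq_adj _ _ _ _) nk sk e1 f1; last by left.
have hsz' : (size (u1 ++ u2) + size v <= N)%N by move: hsz; rewrite !size_cat /=; lia.
have Ceq' : (count sg (u1 ++ u2) + count sg v = count (predC sg) (u1 ++ u2) + count (predC sg) v)%N.
  by move: Ceq; rewrite !count_cat /= sk (negbTE nk) /=; lia.
case: (IH (u1 ++ u2) v hsz' (Hadj_rem Hu) Hv (Hcross_reml Hc) (Hadjs_rem Hus) Hvs
  (Hcrosss_reml Hcs) (Cu_rem nk sk Cuu) Cvv Ceq' e2 f2); first by left.
move=> C; right => t; have := C t; rewrite !count_cat /= sk (negbTE nk) ev /=; lia.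
Qed.

End Abstract.

Lemma ordne (i j : nat) : (i < 4)%N -> (j < 4)%N -> i != j -> (inord i == inord j :> 'I_4) = false.
Proof. by move=> hi hj hij; apply/negbTE; rewrite -val_eqE /= !inordK. Qed.

Lemma tup4E (R : realType) (y1 y2 y3 y4 : R) i : (i < 4)%N ->
  tnth (tup4 y1 y2 y3 y4) (inord i) = nth 0 [:: y1; y2; y3; y4] i.
Proof. by move=> h; rewrite (tnth_nth 0) /= inordK. Qed.

Lemma pc1 (R : realType) (w : R -> R -> \bar R) y1 y2 y3 y4 :
  pair_cost w (tup4 y1 y2 y3 y4) (tperm (inord 1) (inord 3)) = (w y1 y4 + w y3 y2)%E.
Proof. by rewrite /pair_cost !permE /= !eqxx !ordne // !tup4E. Qed.

Lemma pc0 (R : realType) (w : R -> R -> \bar R) y1 y2 y3 y4 :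
  pair_cost w (tup4 y1 y2 y3 y4) 1%g = (w y1 y2 + w y3 y4)%E.
Proof. by rewrite /pair_cost !perm1 !tup4E. Qed.

Lemma bigmin_le (R : realType) (F : 'S_4 -> \bar R) s : (\big[mine/+oo%E]_(s0 : 'S_4) F s0 <= F s)%E.
Proof. by rewrite (bigD1 s) //= ge_min lexx. Qed.

Section FP.
Variables (R : realType) (I : interval R) (w : R -> R -> \bar R) (y1 y2 y3 y4 : R).
Hypotheses (h1 : y1 \in I) (h2 : y2 \in I) (h3 : y3 \in I) (h4 : y4 \in I)
  (l12 : y1 <= y2) (l23 : y2 <= y3) (l34 : y3 <= y4).

Lemma FP1 : well_ordering I w -> (w y1 y3 + w y2 y4 <= w y1 y4 + w y3 y2)%E.
Proof.
case=> _ _ H; rewrite (H _ _ _ _ h1 h2 h3 h4 l12 l23 l34) -(pc1 w).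
exact: bigmin_le.
Qed.

Lemma FP2 : well_ordering I w -> (w y1 y3 + w y2 y4 <= w y1 y2 + w y3 y4)%E.
Proof.
case=> _ _ H; rewrite (H _ _ _ _ h1 h2 h3 h4 l12 l23 l34) -(pc0 w).
exact: bigmin_le.
Qed.

Lemma diracs2 (p q r s : R) : diracs [:: p; q] = diracs [:: r; s] ->
  (p = r /\ q = s) \/ (p = s /\ q = r).
Proof.
move=> E; have Ep := congr1 (fun f => f p) E; have Eq := congr1 (fun f => f q) E.
move: Ep Eq; rewrite /diracs /= !eqxx.
case: (eqVneq r p) => [->|rp].
  case: (eqVneq s q) => [->|sq]; first by left.
  by move=> _; case: (p == q).
move=> e1 e2; case: (s =P p) e1 e2 => [-> e1 e2|sp]; last by case: (q == p).
case: (r =P q) e2 => [-> _|rq]; first by right.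
by case: (p == q).
Qed.

Lemma FP1s : strictly_well_ordering I w ->
  (w y1 y3 + w y2 y4 = w y1 y4 + w y3 y2)%E -> (w y1 y3 + w y2 y4 != +oo)%E ->
  y3 = y4 \/ y1 = y2.
Proof.
case=> _ H E F; have := H _ _ _ _ h1 h2 h3 h4 l12 l23 l34 (tperm (inord 1) (inord 3)).
rewrite /= -/(pair_cost w (tup4 y1 y2 y3 y4) _) pc1 => /(_ E).
rewrite /= !permE /= !eqxx !ordne // !tup4E //=.
case=> [/eqP|[/diracs2|/diracs2]]; first by rewrite (negbTE F).
  by case=> [[_ ?]|[? ?]]; left; congruence.
by case=> [[? ?]|[? _]]; right; congruence.
Qed.

Lemma FP2s : strictly_well_ordering I w ->
  (w y1 y3 + w y2 y4 = w y1 y2 + w y3 y4)%E -> (w y1 y3 + w y2 y4 != +oo)%E ->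
  y2 = y3.
Proof.
case=> _ H E F; have := H _ _ _ _ h1 h2 h3 h4 l12 l23 l34 1%g.
rewrite /= -/(pair_cost w (tup4 y1 y2 y3 y4) _) pc0 => /(_ E).
rewrite /= !perm1 !tup4E //=.
case=> [/eqP|[/diracs2|/diracs2]]; first by rewrite (negbTE F).
  by case=> [[_ ?]|[? ?]]; congruence.
  case=> [[e1 e2]|[e1 e2]]; apply/le_anti; rewrite l23 /=.
    by rewrite -e1.
  by apply: le_trans l34 _; rewrite -e1.
Qed.

End FP.

Section FA.
Variables (R : realType) (n : nat).
Local Notation N := (2 * n)%N.

Definition ez (X : {set 'I_N}) (j : 'I_N) : int := if j \in X then 1 else -1.
Definition Pz (X : {set 'I_N}) (k : nat) : int := \sum_(j < N | (j < k)%N) ez X j.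

Lemma fA_nat X k : fA (R:=R) X k%:R = (Pz X k)%:~R.
Proof.
rewrite /fA /Pz rmorph_sum; apply: eq_big => j; first by rewrite ler_nat.
by rewrite /ez; case: (j \in X).
Qed.

Lemma fA_trunc X (t : R) : fA X t = (Pz X (Num.truncn t))%:~R.
Proof.
rewrite /fA /Pz rmorph_sum; apply: eq_big => j; first by rewrite truncn_gt_nat.
by rewrite /ez; case: (j \in X).
Qed.

Lemma Pz_succ X (j : 'I_N) : Pz X j.+1 = Pz X j + ez X j.
Proof.
rewrite /Pz (bigD1 j) ?ltnSn //= addrC; congr (_ + _); apply: eq_bigl => i.
by rewrite ltnS ltn_neqAle -val_eqE andbC.
Qed.

Lemma Pz_ge X k : (N <= k)%N -> Pz X k = Pz X N.
Proof. by move=> h; apply: eq_bigl => i; rewrite ltn_ord (leq_trans (ltn_ord i) h). Qed.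

Lemma Pz0 X : Pz X 0 = 0.
Proof. by rewrite /Pz big_pred0. Qed.

Lemma PzN (X : {set 'I_N}) : #|X| = n -> Pz X N = 0.
Proof.
move=> hX; rewrite /Pz (bigID (fun j => j \in X)) /=.
rewrite (eq_bigr (fun _ => 1)); last by move=> i /andP[_]; rewrite /ez => ->.
rewrite [X in _ + X](eq_bigr (fun _ => -1)); last by move=> i /andP[_ hi]; rewrite /ez (negbTE hi).
rewrite !sumr_const.
have e1 : #|[pred j : 'I_(2*n) | (j < 2 * n)%N && (j \in X)]| = n.
  by apply: (etrans _ hX); apply: eq_card => j; rewrite inE ltn_ord.
have e2 : #|[pred j : 'I_(2*n) | (j < 2 * n)%N && ~~ (j \in X)]| = n.
  have := cardsC X; rewrite card_ord hX => h.
  have h2 : #|~: X| = n by lia.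
  by apply: (etrans _ h2); apply: eq_card => j; rewrite !inE ltn_ord.
rewrite e1 e2 mulNrn; lia.
Qed.


Lemma ex_max (f : nat -> int) K : exists k0, (k0 <= K)%N /\ forall k, (k <= K)%N -> f k <= f k0.
Proof.
elim: K => [|K [k0 [hk0 H]]]; first by exists 0%N; split => // k; rewrite leqn0 => /eqP->.
case: (lerP (f k0) (f K.+1)) => hf.
  exists K.+1; split => // k; rewrite leq_eqVlt => /orP[/eqP->//|/H]; move=> h; exact: le_trans h hf.
exists k0; split; first by apply: leqW.
move=> k; rewrite leq_eqVlt => /orP[/eqP->|/H//]; exact: ltW.
Qed.

Lemma ex_min (f : nat -> int) K : exists k0, (k0 <= K)%N /\ forall k, (k <= K)%N -> f k0 <= f k.
Proof.
have [k0 [h H]] := ex_max (fun k => - f k) K; exists k0; split => // k /H.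
by rewrite lerN2.
Qed.

Lemma Pz_max X : exists k0, forall k, Pz X k <= Pz X k0.
Proof.
have [k0 [_ H]] := ex_max (Pz X) N; exists k0 => k.
case: (leqP k N) => hk; first exact: H.
by rewrite (Pz_ge X (ltnW hk)); apply: H.
Qed.

Lemma Pz_min X : exists k0, forall k, Pz X k0 <= Pz X k.
Proof.
have [k0 [_ H]] := ex_min (Pz X) N; exists k0 => k.
case: (leqP k N) => hk; first exact: H.
by rewrite (Pz_ge X (ltnW hk)); apply: H.
Qed.

Lemma fmaxE X k0 : (forall k, Pz X k <= Pz X k0) -> fmax (fA (R:=R) X) = (Pz X k0)%:~R.
Proof.
move=> H; rewrite /fmax.
have hub : ubound (range (fA (R:=R) X)) (Pz X k0)%:~R.
  by move=> y [t _ <-]; rewrite fA_trunc ler_int.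
apply/le_anti/andP; split.
  by apply: ge_sup => //; exists (fA X 0); exists 0.
apply: (ub_le_sup (ex_intro _ _ hub)); exists (k0%:R) => //; exact: fA_nat.
Qed.

Lemma fminE X k0 : (forall k, Pz X k0 <= Pz X k) -> fmin (fA (R:=R) X) = (Pz X k0)%:~R.
Proof.
move=> H; rewrite /fmin.
have hlb : lbound (range (fA (R:=R) X)) (Pz X k0)%:~R.
  by move=> y [t _ <-]; rewrite fA_trunc ler_int.
apply/le_anti/andP; split; last first.
  by apply: lb_le_inf => //; exists (fA X 0); exists 0.
apply: (ge_inf (ex_intro _ _ hlb)); exists (k0%:R) => //; exact: fA_nat.
Qed.

End FA.

Section LS.
Variables (R : realType) (n : nat) (A : {set 'I_(2 * n)}).
Local Notation N := (2 * n)%N.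
Variables (M : int) (k0 : nat).
Hypotheses (hk0 : forall k, Pz A k <= Pz A k0) (hM : Pz A k0 = M) (hM1 : 1 <= M)
  (hA : #|A| = n).

Lemma HM k : Pz A k <= M.
Proof. by rewrite -hM. Qed.

Lemma fmaxA : fmax (fA (R:=R) A) = M%:~R.
Proof. by rewrite (fmaxE R hk0) hM. Qed.

Lemma inL j : (j \in Lset (R:=R) A) = (Pz A j.+1 == M).
Proof. by rewrite inE fA_nat fmaxA eqr_int. Qed.

Lemma inL' j : (j \in Lset_succ (R:=R) A) = (0 < j)%N && (Pz A j == M).
Proof. by rewrite inE fA_nat fmaxA eqr_int. Qed.

Lemma L_A (j : 'I_N) : Pz A j.+1 = M -> j \in A /\ Pz A j = M - 1.
Proof.
rewrite Pz_succ /ez => h; have := HM j; case: (j \in A) h => h; split => //; lia.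
Qed.

Lemma L'_nA (j : 'I_N) : Pz A j = M -> j \notin A /\ Pz A j.+1 = M - 1.
Proof.
move=> h; have := HM j.+1; rewrite Pz_succ /ez h; case: (j \in A) => //= h'; split => //; lia.
Qed.

Lemma L_lt (j : 'I_N) : Pz A j.+1 = M -> (j.+1 < N)%N.
Proof.
move=> h; rewrite ltn_neqAle ltn_ord andbT; apply/eqP => e.
by move: h; rewrite e PzN // => h; lia.
Qed.

Definition succ (j : 'I_N) : 'I_N := insubd j j.+1.

Lemma succE (j : 'I_N) : (j.+1 < N)%N -> val (succ j) = j.+1.
Proof. by move=> h; rewrite val_insubd h. Qed.

Lemma L'_eq : Lset_succ (R:=R) A = succ @: Lset (R:=R) A.
Proof.
apply/setP => i; rewrite inL'; apply/andP/imsetP.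
  case=> hi /eqP hP.
  have hi' : (i.-1 < N)%N by apply: leq_ltn_trans (leq_pred _) (ltn_ord i).
  exists (Ordinal hi'); first by rewrite inL /= prednK // hP.
  have hlt : ((Ordinal hi').+1 < N)%N by rewrite /= prednK.
  by apply: val_inj; rewrite succE //= prednK.
case=> j; rewrite inL => /eqP hj ->; rewrite succE ?L_lt //; split => //; exact/eqP.
Qed.

Lemma inBA j : (j \in BA (R:=R) A) = ((j \in A) || (j \in Lset_succ (R:=R) A)) && (j \notin Lset (R:=R) A).
Proof. by rewrite !inE andbC. Qed.

Lemma Pz_BA k : (k <= N)%N ->
  Pz (BA (R:=R) A) k = Pz A k - (if (0 < k)%N && (Pz A k == M) then 2 else 0).
Proof.
elim: k => [|k IH] hk; first by rewrite !Pz0.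
have hkN : (k < N)%N by [].
set j := Ordinal hkN; have vj : nat_of_ord j = k := erefl.
have eA : Pz A k.+1 = Pz A k + ez A j := Pz_succ A j.
have eB : Pz (BA (R:=R) A) k.+1 = Pz (BA (R:=R) A) k + ez (BA (R:=R) A) j := Pz_succ _ j.
have hk' : (k <= N)%N := ltnW hk.
rewrite eB (IH hk') /ez.
rewrite (inBA j) (inL j) (inL' j) vj.
case: (eqVneq (Pz A k.+1) M) => hk1.
  have [jA hPk] := L_A (j:=j) hk1; rewrite jA hPk hk1 ?eqxx.
  have -> : (M - 1 == M) = false by apply/negbTE; apply/eqP; lia.
  by rewrite andbF /=; lia.
case: (boolP ((0 < k)%N && (Pz A k == M))) => hk2.
  move: hk2 => /andP[k0' /eqP hPk].
  have [jA hPk1] := @L'_nA j hPk; rewrite vj in hPk1.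
  rewrite (negbTE jA) hPk1 hPk /=.
  rewrite /=; lia.
rewrite eA /ez orbF andbF /=; case: (j \in A) => /=; lia.
Qed.


Lemma PzB_bounds (m : int) : (forall k, m <= Pz A k) -> m <= M - 2 ->
  forall k, Pz (BA (R:=R) A) k < M /\ m <= Pz (BA (R:=R) A) k.
Proof.
move=> hm h2 k; wlog hk : k / (k <= N)%N.
  move=> H; case: (leqP k N) => hk; first exact: H.
  by rewrite (Pz_ge _ (ltnW hk)); apply: H.
rewrite Pz_BA //; have := HM k; have := hm k.
case: (boolP ((0 < k)%N && (Pz A k == M))) => [/andP[_ /eqP ->]|hc]; first by lia.
case: (posnP k) => [->|kp]; first by rewrite Pz0; lia.
move: hc; rewrite kp /= => /eqP hne; lia.
Qed.

Lemma osc_part : 2 <= Osc (fA (R:=R) A) -> Osc (fA (R:=R) (BA (R:=R) A)) < Osc (fA (R:=R) A).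
Proof.
have [k1 hk1] := Pz_min A.
have [k0B hk0B] := Pz_max (BA (R:=R) A).
have [k1B hk1B] := Pz_min (BA (R:=R) A).
rewrite /Osc fmaxA (fminE R hk1) (fmaxE R hk0B) (fminE R hk1B) -!intrB.
rewrite -[2 : R]/((2 : int)%:~R) !ler_int ltr_int => h2.
have [b1 _] := PzB_bounds hk1 (ltac:(lia)) k0B.
have [_ b2] := PzB_bounds hk1 (ltac:(lia)) k1B.
lia.
Qed.

End LS.

Lemma split_or (N : nat) (T : Type) (idx : T) (op : Monoid.com_law idx) (F : 'I_N -> T)
  (p q r : pred 'I_N) : (forall i, ~~ (p i && q i)) ->
  \big[op/idx]_(i | (p i || q i) && r i) F i =
  op (\big[op/idx]_(i | p i && r i) F i) (\big[op/idx]_(i | q i && r i) F i).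
Proof.
move=> H; rewrite (bigID p); congr (op _ _); apply: eq_bigl => i;
by have := H i; case: (p i); case: (q i); case: (r i).
Qed.

Lemma rearr (R : realType) (a b d e f h : \bar R) :
  ((a + b + (b + d)) + (e + f + (f + h)) = (a + d + (e + h)) + ((b + f) + (b + f)))%E.
Proof.
have E1 : (a + b + (b + d) = (a + d) + (b + b))%E by rewrite [(b + d)%E]addeC addeACA.
have E2 : (e + f + (f + h) = (e + h) + (f + f))%E by rewrite [(f + h)%E]addeC addeACA.
by rewrite E1 E2 addeACA [((b + b) + _)%E]addeACA.
Qed.

Lemma swap_dh (R : realType) (a d e h : \bar R) : (a + d + (e + h) = a + h + (e + d))%E.
Proof. by rewrite addeACA [(d + h)%E]addeC addeACA. Qed.

Section Cost.
Variables (R : realType) (n : nat) (A : {set 'I_(2 * n)}).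
Local Notation N := (2 * n)%N.
Variables (M : int) (k0 : nat).
Hypotheses (hk0 : forall k, Pz A k <= Pz A k0) (hM : Pz A k0 = M) (hM1 : 1 <= M)
  (hA : #|A| = n).
Variables (I : interval R) (w : R -> R -> \bar R) (x : 'I_N -> R).
Hypotheses (wfin : forall a b, a \in I -> b \in I -> w a b != -oo%E) (hw : well_ordering I w)
  (hxI : forall i, x i \in I) (hxm : forall i j : 'I_N, (i <= j)%N -> x i <= x j).

Definition W (i j : 'I_N) := w (x i) (x j).

Lemma Wsym i j : W i j = W j i.
Proof. by case: hw => _ hs _; rewrite /W hs. Qed.

Lemma Wfin i j : W i j != -oo%E.
Proof. exact: wfin. Qed.

Lemma cost_map (s : seq 'I_N) : uniq s ->
  cost w (map x s) = (\sum_(a <- s) \sum_(b <- s | b != a) W a b)%E.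
Proof.
case: s => [|a0 s0] hu; first by rewrite /cost big_ord0 big_nil.
rewrite /cost size_map (big_nth a0) big_mkord; apply: eq_bigr => i _.
rewrite (big_nth a0) big_mkord; apply: eq_big => j.
  by rewrite (nth_uniq a0 (ltn_ord j) (ltn_ord i) hu) -val_eqE eq_sym.
by move=> _; rewrite /W !(nth_map a0).
Qed.

Definition block (p q : pred 'I_N) := (\sum_(i | p i) \sum_(j | q j && (j != i)) W i j)%E.

Lemma cost_block (X : {set 'I_N}) : cost w (xsub x X) = block (fun i => i \in X) (fun i => i \in X).
Proof.
rewrite /xsub cost_map ?enum_uniq // big_enum; apply: eq_bigr => a _.
by rewrite big_enum_cond.
Qed.

Lemma block4 (X p1 p2 : pred 'I_N) : (forall i, X i = p1 i || p2 i) -> (forall i, ~~ (p1 i && p2 i)) ->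
  block X X = ((block p1 p1 + block p1 p2) + (block p2 p1 + block p2 p2))%E.
Proof.
move=> hX hd; rewrite /block (eq_bigl (fun i => (p1 i || p2 i) && true)); last first.
  by move=> i; rewrite hX andbT.
rewrite split_or //; congr (_ + _)%E; rewrite -big_split /=; apply: eq_big => [i|i _].
- by rewrite andbT.
- rewrite (eq_bigl (fun j => (p1 j || p2 j) && (j != i))) ?split_or // => j; by rewrite hX.
- by rewrite andbT.
- rewrite (eq_bigl (fun j => (p1 j || p2 j) && (j != i))) ?split_or // => j; by rewrite hX.
Qed.

Lemma block_sym (p q : pred 'I_N) : block p q = block q p.
Proof.
rewrite /block.
transitivity (\sum_(i | p i) \sum_(j | q j) (if j != i then W i j else 0))%E.
  by apply: eq_bigr => i _; rewrite big_mkcondr.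
rewrite exchange_big /=; apply: eq_bigr => j _; rewrite big_mkcondr.
by apply: eq_bigr => i _; rewrite eq_sym Wsym.
Qed.

Lemma block_nd (p q : pred 'I_N) : (forall i j, p i -> q j -> j != i) ->
  block p q = (\sum_(i | p i) \sum_(j | q j) W i j)%E.
Proof.
move=> H; apply: eq_bigr => i hi; apply: eq_bigl => j.
by case: (boolP (q j)) => //= hj; rewrite H.
Qed.

Let iL := inL R hk0 hM.
Let iL' := inL' R hk0 hM.
Let LA := L_A hk0 hM hM1 hA.
Let LnA := L'_nA hk0 hM hM1 hA.
Let Llt := L_lt hM hM1 hA.
Let Leq := L'_eq R hk0 hM hM1 hA.

Definition pL (j : 'I_N) := j \in Lset (R:=R) A.
Definition pL' (j : 'I_N) := j \in Lset_succ (R:=R) A.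
Definition pS j := pL j || pL' j.
Definition R0 j := (j \in A) && ~~ pS j.
Definition R1 j := (j \notin A) && ~~ pS j.

Lemma pL_A j : pL j -> j \in A.
Proof. by rewrite /pL iL => /eqP /LA []. Qed.

Lemma pL'_nA j : pL' j -> j \notin A.
Proof. by rewrite /pL' iL' => /andP[_ /eqP /LnA []]. Qed.

Lemma pL_lt l : pL l -> (l.+1 < N)%N.
Proof. by rewrite /pL iL => /eqP /Llt. Qed.

Lemma succ_val l : pL l -> val (succ l) = l.+1.
Proof. by move=> hl; rewrite succE // pL_lt. Qed.

Lemma pL'_succ l : pL l -> pL' (succ l).
Proof. by move=> hl; rewrite /pL' Leq; apply: imset_f. Qed.

Lemma memA j : (j \in A) = R0 j || pL j.
Proof.
have h1 := @pL_A j; have h2 := @pL'_nA j.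
move: h1 h2; rewrite /R0 /R1 /pS /pL /pL'.
case: (j \in Lset _); case: (j \in Lset_succ _); case: (j \in A) => //= h1 h2;
  (by have := h1 isT) || (by have := h2 isT).
Qed.

Lemma memAc j : (j \in ~: A) = R1 j || pL' j.
Proof.
have h1 := @pL_A j; have h2 := @pL'_nA j.
move: h1 h2; rewrite finset.in_setC /R0 /R1 /pS /pL /pL'.
case: (j \in Lset _); case: (j \in Lset_succ _); case: (j \in A) => //= h1 h2;
  (by have := h1 isT) || (by have := h2 isT).
Qed.

Lemma memB j : (j \in BA (R:=R) A) = R0 j || pL' j.
Proof.
have h1 := @pL_A j; have h2 := @pL'_nA j.
move: h1 h2; rewrite inBA /R0 /R1 /pS /pL /pL'.
case: (j \in Lset _); case: (j \in Lset_succ _); case: (j \in A) => //= h1 h2;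
  (by have := h1 isT) || (by have := h2 isT).
Qed.

Lemma memBc j : (j \in ~: BA (R:=R) A) = R1 j || pL j.
Proof.
have h1 := @pL_A j; have h2 := @pL'_nA j.
move: h1 h2; rewrite finset.in_setC inBA /R0 /R1 /pS /pL /pL'.
case: (j \in Lset _); case: (j \in Lset_succ _); case: (j \in A) => //= h1 h2;
  (by have := h1 isT) || (by have := h2 isT).
Qed.

Lemma dis0 (p : pred 'I_N) i : (forall i, p i -> pS i) -> ~~ (R0 i && p i).
Proof. by move=> H; case: (boolP (p i)) => [/H hS|_]; rewrite ?andbF // /R0 hS andbF. Qed.

Lemma dis1 (p : pred 'I_N) i : (forall i, p i -> pS i) -> ~~ (R1 i && p i).
Proof. by move=> H; case: (boolP (p i)) => [/H hS|_]; rewrite ?andbF // /R1 hS andbF. Qed.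

Lemma pL_S i : pL i -> pS i. Proof. by rewrite /pS => ->. Qed.
Lemma pL'_S i : pL' i -> pS i. Proof. by rewrite /pS => ->; rewrite orbT. Qed.

Definition KA := (block pL R0 + block pL' R1)%E.
Definition KB := (block pL' R0 + block pL R1)%E.
Definition cc := (block R0 R0 + block pL pL + (block R1 R1 + block pL' pL'))%E.

Lemma TA : (cost w (xsub x A) + cost w (xsub x (~: A)) = cc + (KA + KA))%E.
Proof.
rewrite !cost_block (@block4 (fun i => i \in A) R0 pL memA (fun i => dis0 i pL_S)).
rewrite (@block4 (fun i => i \in ~: A) R1 pL' memAc (fun i => dis1 i pL'_S)).
by rewrite (block_sym R0 pL) (block_sym R1 pL') rearr.
Qed.

Lemma TB : (cost w (xsub x (BA (R:=R) A)) + cost w (xsub x (~: BA (R:=R) A)) = cc + (KB + KB))%E.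
Proof.
rewrite !cost_block (@block4 (fun i => i \in BA (R:=R) A) R0 pL' memB (fun i => dis0 i pL'_S)).
rewrite (@block4 (fun i => i \in ~: BA (R:=R) A) R1 pL memBc (fun i => dis1 i pL_S)).
rewrite (block_sym R0 pL') (block_sym R1 pL) rearr /cc /KB; congr (_ + _)%E; exact: swap_dh.
Qed.

Lemma sum_L' (T : Type) (idx : T) (op : Monoid.com_law idx) (F : 'I_N -> T) :
  \big[op/idx]_(i | pL' i) F i = \big[op/idx]_(l | pL l) F (succ l).
Proof.
rewrite (eq_bigl (fun i => i \in @succ n @: Lset (R:=R) A)); last by move=> i; rewrite /pL' Leq.
rewrite big_imset // => a b ha hb /(congr1 val).
by rewrite (succ_val ha) (succ_val hb) => -[] /val_inj.
Qed.

Lemma nd (p q : pred 'I_N) : (forall i, p i -> pS i) -> (forall j, q j -> ~~ pS j) ->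
  forall i j, p i -> q j -> j != i.
Proof. by move=> hp hq i j /hp hi /hq; apply: contra => /eqP ->. Qed.

Lemma R0_nS j : R0 j -> ~~ pS j. Proof. by case/andP. Qed.
Lemma R1_nS j : R1 j -> ~~ pS j. Proof. by case/andP. Qed.

Definition afun (l j : 'I_N) := if j \in A then W l j else W (succ l) j.
Definition bfun (l j : 'I_N) := if j \in A then W (succ l) j else W l j.

Lemma KAE : KA = (\sum_(l | pL l) \sum_(j | ~~ pS j) afun l j)%E.
Proof.
rewrite /KA (block_nd (nd pL_S R0_nS)) (block_nd (nd pL'_S R1_nS)) sum_L' -big_split.
apply: eq_bigr => l hl /=; rewrite [RHS](bigID (fun j => j \in A)) /=.
congr (_ + _)%E; apply: eq_big => [j|j hj].
- by rewrite /R0 andbC.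
- by move: hj; rewrite /afun /R0 => /andP[-> _].
- by rewrite /R1 andbC.
- by move: hj; rewrite /afun /R1 => /andP[hj' _]; rewrite (negbTE hj').
Qed.

Lemma KBE : KB = (\sum_(l | pL l) \sum_(j | ~~ pS j) bfun l j)%E.
Proof.
rewrite /KB (block_nd (nd pL'_S R0_nS)) (block_nd (nd pL_S R1_nS)) sum_L' addeC -big_split.
apply: eq_bigr => l hl /=; rewrite [RHS](bigID (fun j => j \in A)) /= addeC.
congr (_ + _)%E; apply: eq_big => [j|j hj].
- by rewrite /R0 andbC.
- by move: hj; rewrite /bfun /R0 => /andP[-> _].
- by rewrite /R1 andbC.
- by move: hj; rewrite /bfun /R1 => /andP[hj' _]; rewrite (negbTE hj').
Qed.

Definition ul (l : 'I_N) := [seq j <- index_enum 'I_N | ~~ pS j && (j < l)%N].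
Definition vl (l : 'I_N) := [seq j <- index_enum 'I_N | ~~ pS j && (l.+1 < j)%N].

Lemma decomp_sum (T : Type) (idx : T) (op : Monoid.com_law idx) l (F : 'I_N -> T) : pL l ->
  \big[op/idx]_(j | ~~ pS j) F j = op (\big[op/idx]_(j <- ul l) F j) (\big[op/idx]_(j <- vl l) F j).
Proof.
move=> hl; rewrite /ul /vl !big_filter [LHS](bigID (fun j : 'I_N => (j < l)%N)) /=; f_equal.
apply: eq_bigl => j; case: (boolP (pS j)) => //= hS.
have h1 : nat_of_ord j != nat_of_ord l by apply: contraNneq hS => /val_inj ->; rewrite pL_S.
have h2 : nat_of_ord j != l.+1.
  apply: contraNneq hS => e; rewrite (_ : j = succ l) ?pL'_S ?pL'_succ //.
  by apply: val_inj; rewrite succ_val.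
move: h1 h2 => /eqP h1 /eqP h2; rewrite -leqNgt; apply/idP/idP => h; lia.
Qed.

Definition ltI (i j : 'I_N) := (i < j)%N.

Lemma trans_lt : transitive ltI.
Proof. move=> b a c; exact: ltn_trans. Qed.

Lemma sorted_ie : sorted ltI (index_enum 'I_N).
Proof.
rewrite -(filter_predT (index_enum 'I_N)) deprecated_filter_index_enum.
have e : enum (@predT 'I_N) = enum 'I_N by apply: eq_enum.
have : sorted ltn [seq val i | i <- enum 'I_N] by rewrite val_enum_ord; exact: iota_ltn_sorted.
by rewrite sorted_map e.
Qed.

Lemma sorted_ul l : sorted ltI (ul l).
Proof. exact: (sorted_filter trans_lt _ sorted_ie). Qed.
Lemma sorted_vl l : sorted ltI (vl l).
Proof. exact: (sorted_filter trans_lt _ sorted_ie). Qed.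

Lemma drop_thr (s : seq 'I_N) m : sorted ltI s -> exists t, drop m s = [seq j : 'I_N <- s | (t <= j)%N].
Proof.
elim: s m => [|y s IH] m hs; first by exists 0%N; case: m.
case: m => [|m].
  by exists 0%N; rewrite drop0; symmetry; apply/all_filterP/allP.
have hmin := order_path_min trans_lt hs.
have [t ht] := IH m (path_sorted hs); exists (maxn t y.+1).
rewrite /= ht geq_max ltnn andbF; apply: eq_in_filter => j hj.
by move/allP: hmin => /(_ j hj); rewrite /ltI geq_max => ->; rewrite andbT.
Qed.

Lemma take_thr (s : seq 'I_N) m : sorted ltI s -> exists t, take m s = [seq j : 'I_N <- s | (j < t)%N].
Proof.
elim: s m => [|y s IH] m hs; first by exists 0%N; case: m.
case: m => [|m].
  exists 0%N; rewrite take0; symmetry; apply/eqP; rewrite -size_eq0 size_filter.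
  by rewrite eqn0Ngt -has_count; apply/hasPn => j.
have hmin := order_path_min trans_lt hs.
have [t ht] := IH m (path_sorted hs); exists (maxn t y.+1).
rewrite /= ht leq_max ltnSn orbT; congr (_ :: _); apply: eq_in_filter => j hj.
move/allP: hmin => /(_ j hj); rewrite /ltI => hyj.
by rewrite leq_max [(j < y.+1)%N]ltnS [(j <= y)%N]leqNgt hyj orbF.
Qed.

Lemma count_ez (s : seq 'I_N) : (count (fun j => j \in A) s)%:Z - (count (predC (fun j => j \in A)) s)%:Z
  = \sum_(j <- s) ez A j.
Proof.
elim: s => [|y s IH]; first by rewrite big_nil.
rewrite big_cons -IH /= /ez; case: (y \in A) => /=; lia.
Qed.

Definition Qz (k : nat) : int := \sum_(j < N | (j < k)%N && ~~ pS j) ez A j.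

Lemma Qz_succ (j : 'I_N) : Qz j.+1 = Qz j + (if pS j then 0 else ez A j).
Proof.
rewrite /Qz; case: (boolP (pS j)) => hS.
  rewrite addr0; apply: eq_bigl => i; case: (eqVneq i j) => [->|ne].
    by rewrite hS !andbF.
  by rewrite ltnS [(i < j)%N]ltn_neqAle val_eqE ne.
rewrite (bigD1 j) /= ?ltnSn ?hS // addrC; congr (_ + _); apply: eq_bigl => i.
rewrite ltnS [(i < j)%N]ltn_neqAle val_eqE.
by case: (i == j); rewrite ?andbF ?andbT //= andbC.
Qed.

Lemma QzE k : (k <= N)%N -> Qz k = Pz A k - (if (0 < k)%N && (Pz A k == M) then 1 else 0).
Proof.
elim: k => [|k IH] hk; first by rewrite /Qz Pz0 big_pred0.
have hkN : (k < N)%N by [].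
set j := Ordinal hkN; have vj : nat_of_ord j = k := erefl.
have eA : Pz A k.+1 = Pz A k + ez A j := Pz_succ A j.
have eQ : Qz k.+1 = Qz j + (if pS j then 0 else ez A j) := Qz_succ j.
have hk' : (k <= N)%N := ltnW hk.
rewrite eQ vj (IH hk') /pS /pL /pL' (iL j) (iL' j) vj.
case: (eqVneq (Pz A k.+1) M) => hk1.
  have [jA hPk] := LA (j:=j) hk1; rewrite hPk hk1.
  rewrite (_ : (M - 1 == M) = false); last by apply/negbTE; apply/eqP; lia.
  rewrite andbF /=; lia.
case: (boolP ((0 < k)%N && (Pz A k == M))) => hk2.
  move: hk2 => /andP[k0' /eqP hPk].
  have [jA hPk1] := @LnA j hPk; rewrite vj in hPk1.
  rewrite hPk1 hPk /=.
  rewrite /=; lia.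
rewrite eA /=; lia.
Qed.

Lemma Qz_ge k : (N <= k)%N -> Qz k = Qz N.
Proof. by move=> h; apply: eq_bigl => i; rewrite ltn_ord (leq_trans (ltn_ord i) h). Qed.

Lemma Qz_le k : Qz k <= M - 1.
Proof.
wlog hk : k / (k <= N)%N.
  move=> H; case: (leqP k N) => hk; first exact: H.
  by rewrite (Qz_ge (ltnW hk)); apply: H.
rewrite QzE //; have := HM hk0 hM k.
case: (boolP ((0 < k)%N && (Pz A k == M))) => [/andP[_ /eqP ->]|hc]; first by lia.
case: (posnP k) => [->|kp]; first by rewrite Pz0; lia.
move: hc; rewrite kp /= => /eqP hne; lia.
Qed.

Lemma Qz_l l : pL l -> Qz l = M - 1.
Proof.
move=> hl; have hlN := ltnW (ltnW (pL_lt hl)).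
move: (hl); rewrite /pL iL => /eqP /LA [_ hP].
rewrite QzE // hP (_ : (M - 1 == M) = false) ?andbF ?subr0 //.
by apply/negbTE; apply/eqP; lia.
Qed.

Lemma Qz_l2 l : pL l -> Qz l.+2 = M - 1.
Proof.
move=> hl; have hlN := pL_lt hl.
have := pL'_succ hl; rewrite /pL' iL' succ_val // => /andP[_ /eqP hP].
have [_] := @LnA (succ l) (ltac:(by rewrite succ_val)); rewrite succ_val // => hP2.
rewrite QzE // hP2 (_ : (M - 1 == M) = false) ?andbF ?subr0 //.
by apply/negbTE; apply/eqP; lia.
Qed.

Lemma QzN : Qz N = 0.
Proof.
rewrite QzE // (PzN hA) (_ : (0 == M) = false) ?andbF ?subr0 //.
by apply/negbTE; apply/eqP; lia.
Qed.

Lemma sum_u_thr (l t : nat) : \sum_(j < N | (t <= j)%N && (~~ pS j && (j < l)%N)) ez A j = Qz l - Qz (minn t l).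
Proof.
have e : Qz l = Qz (minn t l) + \sum_(j < N | (t <= j)%N && (~~ pS j && (j < l)%N)) ez A j.
  rewrite /Qz (bigID (fun j : 'I_N => (j < minn t l)%N)) /=; congr (_ + _); apply: eq_bigl => j;
  rewrite leq_min ?(leqNgt t j); case: (j < t)%N; case: (j < l)%N; case: (pS j) => //=.
lia.
Qed.

Lemma sum_v_thr (l t : nat) : \sum_(j < N | (j < t)%N && (~~ pS j && (l.+1 < j)%N)) ez A j = Qz (maxn t l.+2) - Qz l.+2.
Proof.
have e : Qz (maxn t l.+2) = Qz l.+2 + \sum_(j < N | (j < t)%N && (~~ pS j && (l.+1 < j)%N)) ez A j.
  rewrite /Qz (bigID (fun j : 'I_N => (j < l.+2)%N)) /=; congr (_ + _); apply: eq_bigl => j;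
  rewrite leq_max ?(ltnNge l.+1 j) ?(ltnS j l.+1); case: (j < t)%N; case: (j <= l.+1)%N; case: (pS j) => //=.
lia.
Qed.

Let sgA := fun j : 'I_N => j \in A.

Lemma Cu_ul l : pL l -> Cu sgA (ul l).
Proof.
move=> hl m; have [t ->] := drop_thr m (sorted_ul l).
have e1 := count_ez [seq j : 'I_N <- ul l | (t <= j)%N].
have e2 : \sum_(j <- [seq j : 'I_N <- ul l | (t <= j)%N]) ez A j = Qz l - Qz (minn t l).
  by rewrite /ul -filter_predI big_filter -(sum_u_thr l t).
have h := Qz_le (minn t l); rewrite (Qz_l hl) in e2.
change (count (predC (fun j => j \in A)) [seq j : 'I_N <- ul l | (t <= j)%N] <=
  count (fun j => j \in A) [seq j : 'I_N <- ul l | (t <= j)%N])%N; lia.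
Qed.

Lemma Cv_vl l : pL l -> Cv sgA (vl l).
Proof.
move=> hl m; have [t ->] := take_thr m (sorted_vl l).
have e1 := count_ez [seq j : 'I_N <- vl l | (j < t)%N].
have e2 : \sum_(j <- [seq j : 'I_N <- vl l | (j < t)%N]) ez A j = Qz (maxn t l.+2) - Qz l.+2.
  by rewrite /vl -filter_predI big_filter -(sum_v_thr l t).
have h := Qz_le (maxn t l.+2); rewrite (Qz_l2 hl) in e2.
change (count (fun j => j \in A) [seq j : 'I_N <- vl l | (j < t)%N] <=
  count (predC (fun j => j \in A)) [seq j : 'I_N <- vl l | (j < t)%N])%N; lia.
Qed.

Lemma Ceq_l l : pL l -> (count sgA (ul l) + count sgA (vl l) =
  count (predC sgA) (ul l) + count (predC sgA) (vl l))%N.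
Proof.
move=> hl; have hlN := pL_lt hl.
have e1 := count_ez (ul l); have e2 := count_ez (vl l).
have e3 : \sum_(j <- ul l) ez A j = Qz l - Qz (minn 0 l).
  by rewrite /ul big_filter -(sum_u_thr l 0).
have e4 : \sum_(j <- vl l) ez A j = Qz (maxn N l.+2) - Qz l.+2.
  by rewrite /vl big_filter -(sum_v_thr l N); apply: eq_bigl => j; rewrite ltn_ord.
move: e3 e4; rewrite (Qz_l hl) (Qz_l2 hl) min0n (maxn_idPl hlN) QzN.
rewrite (_ : Qz 0 = 0); last by rewrite /Qz big_pred0.
move=> e3 e4.
change (count (fun j => j \in A) (ul l) + count (fun j => j \in A) (vl l) =
  count (predC (fun j => j \in A)) (ul l) + count (predC (fun j => j \in A)) (vl l))%N; lia.
Qed.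

Lemma mem_ul l k : (k \in ul l) = ~~ pS k && (k < l)%N.
Proof. by rewrite /ul mem_filter mem_index_enum andbT. Qed.
Lemma mem_vl l k : (k \in vl l) = ~~ pS k && (l.+1 < k)%N.
Proof. by rewrite /vl mem_filter mem_index_enum andbT. Qed.

Lemma sub_lt (s : seq 'I_N) k' k : sorted ltI s -> subseq [:: k'; k] s -> (k' < k)%N.
Proof. by move=> hs hsub; have := subseq_sorted trans_lt hsub hs; rewrite /= andbT. Qed.

Lemma sub_mem1 (s : seq 'I_N) k' k : subseq [:: k'; k] s -> k' \in s.
Proof. by move=> hsub; apply: (mem_subseq hsub); rewrite !inE eqxx. Qed.
Lemma sub_mem2 (s : seq 'I_N) k' k : subseq [:: k'; k] s -> k \in s.
Proof. by move=> hsub; apply: (mem_subseq hsub); rewrite !inE eqxx orbT. Qed.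

Lemma x_succ l : pL l -> x l <= x (succ l).
Proof. by move=> hl; apply: hxm; rewrite succ_val. Qed.

Lemma Hadj_u l : pL l -> Hadj sgA (afun l) (bfun l) (ul l).
Proof.
move=> hl k' k hsub nk hk; rewrite /afun /bfun.
move: nk hk; rewrite /sgA => nk hk; rewrite (negbTE nk) hk.
have hkk := sub_lt (sorted_ul l) hsub.
move: (sub_mem2 hsub); rewrite mem_ul => /andP[_ hkl].
rewrite (Wsym l k') (Wsym (succ l) k') (Wsym (succ l) k) /W.
apply: (FP1 (hxI k') (hxI k) (hxI l) (hxI (succ l)) _ _ _ hw).
- by apply: hxm; apply: ltnW.
- by apply: hxm; apply: ltnW.
- exact: x_succ.
Qed.

Lemma Hadj_v l : pL l -> Hadj sgA (afun l) (bfun l) (vl l).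
Proof.
move=> hl k' k hsub nk hk; rewrite /afun /bfun.
move: nk hk; rewrite /sgA => nk hk; rewrite (negbTE nk) hk.
have hkk := sub_lt (sorted_vl l) hsub.
move: (sub_mem1 hsub); rewrite mem_vl => /andP[_ hkl].
rewrite [X in (_ <= X)%E]addeC (Wsym (succ l) k') /W.
apply: (FP1 (hxI l) (hxI (succ l)) (hxI k') (hxI k) _ _ _ hw).
- exact: x_succ.
- by apply: hxm; rewrite succ_val //; apply: ltnW.
- by apply: hxm; apply: ltnW.
Qed.

Lemma Hcross_l l : pL l -> Hcross sgA (afun l) (bfun l) (ul l) (vl l).
Proof.
move=> hl k k' hku hkv hk nk; rewrite /afun /bfun.
move: nk hk; rewrite /sgA => nk hk; rewrite (negbTE nk) hk.
move: hku hkv; rewrite mem_ul mem_vl => /andP[_ hkl] /andP[_ hkl'].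
rewrite (Wsym (succ l) k) (Wsym l k) /W.
apply: (FP2 (hxI k) (hxI l) (hxI (succ l)) (hxI k') _ _ _ hw).
- by apply: hxm; apply: ltnW.
- exact: x_succ.
- by apply: hxm; rewrite succ_val //; apply: ltnW.
Qed.

Lemma KB_le : (KB <= KA)%E.
Proof.
rewrite KAE KBE; apply: lee_sum => l hl.
rewrite (@decomp_sum _ _ _ l (bfun l) hl) (@decomp_sum _ _ _ l (afun l) hl).
exact: (abs_le (Hadj_u hl) (Hadj_v hl) (Hcross_l hl) (Cu_ul hl) (Cv_vl hl) (Ceq_l hl)).
Qed.

Lemma T_le : (cost w (xsub x (BA (R:=R) A)) + cost w (xsub x (~: BA (R:=R) A)) <=
  cost w (xsub x A) + cost w (xsub x (~: A)))%E.
Proof. by rewrite TA TB; apply: leeD2l; apply: leeD; exact: KB_le. Qed.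

Lemma Hadjs_u l : strictly_well_ordering I w -> pL l ->
  Hadjs sgA (afun l) (bfun l) x (x l = x (succ l)) (ul l).
Proof.
move=> hsw hl k' k hsub nk hk; rewrite /afun /bfun.
move: nk hk; rewrite /sgA => nk hk; rewrite (negbTE nk) hk.
have hkk := sub_lt (sorted_ul l) hsub.
move: (sub_mem2 hsub); rewrite mem_ul => /andP[_ hkl].
rewrite (Wsym l k') (Wsym (succ l) k') (Wsym (succ l) k) /W => he hf.
have [] := FP1s (hxI k') (hxI k) (hxI l) (hxI (succ l)) _ _ _ hsw he hf.
- by apply: hxm; apply: ltnW.
- by apply: hxm; apply: ltnW.
- exact: x_succ.
- by right.
- by left.
Qed.

Lemma Hadjs_v l : strictly_well_ordering I w -> pL l ->
  Hadjs sgA (afun l) (bfun l) x (x l = x (succ l)) (vl l).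
Proof.
move=> hsw hl k' k hsub nk hk; rewrite /afun /bfun.
move: nk hk; rewrite /sgA => nk hk; rewrite (negbTE nk) hk.
have hkk := sub_lt (sorted_vl l) hsub.
move: (sub_mem1 hsub); rewrite mem_vl => /andP[_ hkl].
rewrite [X in (_ = X)%E]addeC (Wsym (succ l) k') /W => he hf.
have [] := FP1s (hxI l) (hxI (succ l)) (hxI k') (hxI k) _ _ _ hsw he hf.
- exact: x_succ.
- by apply: hxm; rewrite succ_val //; apply: ltnW.
- by apply: hxm; apply: ltnW.
- by left.
- by right.
Qed.

Lemma Hcrosss_l l : strictly_well_ordering I w -> pL l ->
  Hcrosss sgA (afun l) (bfun l) (x l = x (succ l)) (ul l) (vl l).
Proof.
move=> hsw hl k k' hku hkv hk nk; rewrite /afun /bfun.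
move: nk hk; rewrite /sgA => nk hk; rewrite (negbTE nk) hk.
move: hku hkv; rewrite mem_ul mem_vl => /andP[_ hkl] /andP[_ hkl'].
rewrite (Wsym (succ l) k) (Wsym l k) /W => he hf.
apply: (FP2s (hxI k) (hxI l) (hxI (succ l)) (hxI k') _ _ _ hsw he hf).
- by apply: hxm; apply: ltnW.
- exact: x_succ.
- by apply: hxm; rewrite succ_val //; apply: ltnW.
Qed.

Lemma nninf_bsum (P : pred 'I_N) (F : 'I_N -> \bar R) : (forall i, F i != -oo%E) ->
  (\sum_(i | P i) F i)%E != -oo%E.
Proof.
move=> H; apply: (big_ind (fun v : \bar R => v != -oo%E)) => //.
exact: nninf_add.
Qed.

Lemma block_nninf p q : block p q != -oo%E.
Proof. by apply: nninf_bsum => i; apply: nninf_bsum => j; apply: Wfin. Qed.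

Lemma sum_eq_each (P : pred 'I_N) (X Y : 'I_N -> \bar R) :
  (forall i, P i -> (X i <= Y i)%E) -> (forall i, X i != -oo%E) -> (forall i, Y i != -oo%E) ->
  (\sum_(i | P i) X i = \sum_(i | P i) Y i)%E -> (\sum_(i | P i) X i != +oo)%E ->
  forall i, P i -> X i = Y i /\ X i != +oo%E.
Proof.
move=> hle hX hY he hf i hi; move: he hf.
rewrite (bigD1 i hi) [X in _ = X -> _](bigD1 i hi) /= => he hf.
have hr : (\sum_(j | P j && (j != i)) X j <= \sum_(j | P j && (j != i)) Y j)%E.
  by apply: lee_sum => j /andP[hj _]; apply: hle.
have [e1 _ f1 _] := split_eq (hle i hi) hr he hf (hX i) (nninf_bsum _ hX) (hY i) (nninf_bsum _ hY).
by [].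
Qed.

Definition cnt (P : pred 'I_N) (t : R) : nat := (\sum_(i | P i && (x i == t)) 1)%N.

Lemma diracs_cnt (X : {set 'I_N}) t : diracs (xsub x X) t = cnt (fun i => i \in X) t.
Proof.
by rewrite /diracs /xsub count_map -sum1_count big_enum_cond.
Qed.

Lemma cnt_or (p1 p2 : pred 'I_N) t : (forall i, ~~ (p1 i && p2 i)) ->
  cnt (fun i => p1 i || p2 i) t = (cnt p1 t + cnt p2 t)%N.
Proof. by move=> H; rewrite /cnt split_or. Qed.

Lemma cnt_eq (p q : pred 'I_N) t : p =1 q -> cnt p t = cnt q t.
Proof. by move=> H; apply: eq_bigl => i; rewrite H. Qed.

Lemma cnt_A t : diracs (xsub x A) t = (cnt R0 t + cnt pL t)%N.
Proof. by rewrite diracs_cnt (cnt_eq _ memA) cnt_or // => i; apply: dis0 pL_S. Qed.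
Lemma cnt_B t : diracs (xsub x (BA (R:=R) A)) t = (cnt R0 t + cnt pL' t)%N.
Proof. by rewrite diracs_cnt (cnt_eq _ memB) cnt_or // => i; apply: dis0 pL'_S. Qed.
Lemma cnt_Bc t : diracs (xsub x (~: BA (R:=R) A)) t = (cnt R1 t + cnt pL t)%N.
Proof. by rewrite diracs_cnt (cnt_eq _ memBc) cnt_or // => i; apply: dis1 pL_S. Qed.

Lemma cnt_L' t : cnt pL' t = (\sum_(l | pL l) (if x (succ l) == t then 1 else 0))%N.
Proof. by rewrite /cnt big_mkcondr sum_L'. Qed.

Lemma cnt_L t : cnt pL t = (\sum_(l | pL l) (if x l == t then 1 else 0))%N.
Proof. by rewrite /cnt big_mkcondr. Qed.

Lemma multiset_sum (P Q : pred 'I_N) (h : R -> \bar R) : (forall t, cnt P t = cnt Q t) ->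
  (\sum_(i | P i) h (x i) = \sum_(i | Q i) h (x i))%E.
Proof.
move=> H; rewrite -[LHS]big_filter -[RHS]big_filter.
rewrite -[LHS](big_map x xpredT h) -[RHS](big_map x xpredT h).
apply: perm_big; rewrite /perm_eq; apply/allP => y _ /=; apply/eqP.
rewrite !count_map !count_filter -!sum1_count.
have := H y; rewrite /cnt => e.
rewrite (eq_bigl (fun i => P i && (x i == y))) ?e; last by move=> i /=; rewrite andbC.
by apply: eq_bigl => i /=; rewrite andbC.
Qed.

Lemma per_l_le l : pL l -> (\sum_(j | ~~ pS j) bfun l j <= \sum_(j | ~~ pS j) afun l j)%E.
Proof.
move=> hl; rewrite (@decomp_sum _ _ _ l (bfun l) hl) (@decomp_sum _ _ _ l (afun l) hl).
exact: (abs_le (Hadj_u hl) (Hadj_v hl) (Hcross_l hl) (Cu_ul hl) (Cv_vl hl) (Ceq_l hl)).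
Qed.

Lemma bfin l j : bfun l j != -oo%E.
Proof. by rewrite /bfun; case: ifP => _; apply: Wfin. Qed.
Lemma afin l j : afun l j != -oo%E.
Proof. by rewrite /afun; case: ifP => _; apply: Wfin. Qed.

Lemma count_sum (p : pred 'I_N) (s : seq 'I_N) : count p s = (\sum_(j <- s) (if p j then 1 else 0))%N.
Proof. by elim: s => [|y s IH]; rewrite ?big_nil ?big_cons //= IH; case: (p y). Qed.

Lemma count_ulvl l (p : pred 'I_N) : pL l -> count p (ul l ++ vl l) = (\sum_(j | ~~ pS j && p j) 1)%N.
Proof.
move=> hl; rewrite count_cat !count_sum.
by rewrite -(@decomp_sum _ _ _ l (fun j => if p j then 1 else 0)%N hl) big_mkcondr.
Qed.

Lemma T_eq_fwd : strictly_well_ordering I w ->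
  (cost w (xsub x (BA (R:=R) A)) + cost w (xsub x (~: BA (R:=R) A)) < +oo)%E ->
  (cost w (xsub x (BA (R:=R) A)) + cost w (xsub x (~: BA (R:=R) A)) =
   cost w (xsub x A) + cost w (xsub x (~: A)))%E ->
  diracs (xsub x A) = diracs (xsub x (BA (R:=R) A)) \/
  diracs (xsub x A) = diracs (xsub x (~: BA (R:=R) A)).
Proof.
move=> hsw; rewrite TA TB => hfin heq.
have hf : (cc + (KB + KB) != +oo)%E by rewrite (lt_eqF hfin).
have hc : cc != -oo%E by rewrite /cc; apply: nninf_add; apply: nninf_add; apply: block_nninf.
have hKA : KA != -oo%E by apply: nninf_add; apply: block_nninf.
have hKB : KB != -oo%E by apply: nninf_add; apply: block_nninf.
have [_ e2 _ f2] := split_eq (lexx cc) (leeD KB_le KB_le) heq hf hc (nninf_add hKB hKB) hc (nninf_add hKA hKA).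
have [eK _ fK _] := split_eq KB_le KB_le e2 f2 hKB hKB hKA hKA.
move: eK fK; rewrite KAE KBE => eK fK.
have each := sum_eq_each per_l_le (fun l => nninf_bsum _ (bfin l)) (fun l => nninf_bsum _ (afin l)) eK fK.
case: (pselect (exists l, pL l /\ x l <> x (succ l))) => [[l [hl hne]]|hall].
  right; have [el fl] := each l hl.
  move: el fl; rewrite (@decomp_sum _ _ _ l (bfun l) hl) (@decomp_sum _ _ _ l (afun l) hl) => el fl.
  have [//|C] := abs_eq (bfin l) (afin l) (Hadj_u hl) (Hadj_v hl) (Hcross_l hl) (Hadjs_u hsw hl)
    (Hadjs_v hsw hl) (Hcrosss_l hsw hl) (Cu_ul hl) (Cv_vl hl) (Ceq_l hl) el fl.
  apply/funext => t; rewrite cnt_A cnt_Bc; congr (_ + _)%N.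
  have := C t; rewrite !count_ulvl // => e.
  rewrite /cnt (eq_bigl (fun j => ~~ pS j && (sgA j && (x j == t)))).
    rewrite e; apply: eq_bigl => j; rewrite /R1 /sgA.
    by case: (j \in A); case: (pS j).
  by move=> j; rewrite /R0 /sgA; case: (j \in A); case: (pS j).
left; apply/funext => t; rewrite cnt_A cnt_B; congr (_ + _)%N.
rewrite cnt_L cnt_L'; apply: eq_bigr => l hl.
case: (eqVneq (x l) (x (succ l))) => [->//|ne]; exfalso; apply: hall; exists l; split => //.
exact/eqP.
Qed.

Lemma T_eq_bwd :
  diracs (xsub x A) = diracs (xsub x (BA (R:=R) A)) \/
  diracs (xsub x A) = diracs (xsub x (~: BA (R:=R) A)) ->
  (cost w (xsub x (BA (R:=R) A)) + cost w (xsub x (~: BA (R:=R) A)) =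
   cost w (xsub x A) + cost w (xsub x (~: A)))%E.
Proof.
rewrite TA TB => hd; suff -> : KB = KA by [].
  rewrite /KA /KB (block_nd (nd pL_S R0_nS)) (block_nd (nd pL'_S R1_nS)).
  rewrite (block_nd (nd pL'_S R0_nS)) (block_nd (nd pL_S R1_nS)).
  case: hd => hd.
    have hL : forall t, cnt pL t = cnt pL' t.
      by move=> t; have := congr1 (fun f => f t) hd; rewrite cnt_A cnt_B => /addnI.
    have e0 : (\sum_(i | pL i) \sum_(j | R0 j) W i j = \sum_(i | pL' i) \sum_(j | R0 j) W i j)%E :=
      multiset_sum (fun y => \sum_(j | R0 j) w y (x j))%E hL.
    have e1 : (\sum_(i | pL i) \sum_(j | R1 j) W i j = \sum_(i | pL' i) \sum_(j | R1 j) W i j)%E :=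
      multiset_sum (fun y => \sum_(j | R1 j) w y (x j))%E hL.
    by rewrite -e0 e1.
  have hR : forall t, cnt R0 t = cnt R1 t.
    by move=> t; have := congr1 (fun f => f t) hd; rewrite cnt_A cnt_Bc => /addIn.
  have e : forall i, (\sum_(j | R0 j) W i j = \sum_(j | R1 j) W i j)%E :=
    fun i => multiset_sum (w (x i)) hR.
  rewrite (eq_bigr _ (fun i _ => e i)) [X in (_ = X + _)%E](eq_bigr _ (fun i _ => e i)).
  by rewrite addeC.
Qed.

End Cost.

Unset Implicit Arguments.

Theorem lemma3p4 (R : realType) (I : interval R) (w : R -> R -> \bar R)
  (w_fin_below : forall x y, x \in I -> y \in I -> w x y != -oo%E)
  (hw : well_ordering I w)
  (n : nat) (A : {set 'I_(2 * n)})
  (hA : #|A| = n) (hmax : 1 <= fmax (fA (R:=R) A)) :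
  (2 <= Osc (fA (R:=R) A) -> Osc (fA (R:=R) (BA (R:=R) A)) < Osc (fA (R:=R) A)) /\
  (forall x : 'I_(2 * n) -> R,
     (forall i, x i \in I) ->
     (forall i j : 'I_(2 * n), (i <= j)%N -> x i <= x j) ->
     (cost w (xsub x (BA (R:=R) A)) + cost w (xsub x (~: BA (R:=R) A))
        <= cost w (xsub x A) + cost w (xsub x (~: A)))%E /\
     (strictly_well_ordering I w ->
      (cost w (xsub x (BA (R:=R) A)) + cost w (xsub x (~: BA (R:=R) A)) < +oo)%E ->
      ((cost w (xsub x (BA (R:=R) A)) + cost w (xsub x (~: BA (R:=R) A))
          = cost w (xsub x A) + cost w (xsub x (~: A)))%E <->
       diracs (xsub x A) = diracs (xsub x (BA (R:=R) A)) \/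
       diracs (xsub x A) = diracs (xsub x (~: BA (R:=R) A))))).
Proof.
have [k0 hk0] := Pz_max A.
have hM : Pz A k0 = Pz A k0 by [].
have hM1 : 1 <= Pz A k0.
  have : ((1 : int)%:~R <= (Pz A k0)%:~R :> R) by rewrite -(fmaxE R hk0).
  by rewrite ler_int.
split; first exact: (osc_part hk0 hM hM1 hA).
move=> x hxI hxm; split; first exact: (T_le hk0 hM hM1 hA hw hxI hxm).
move=> hsw hfin; split.
  exact: (T_eq_fwd hk0 hM hM1 hA w_fin_below hw hxI hxm hsw hfin).
exact: (T_eq_bwd hk0 hM hM1 hA hw hxI).
Qed.
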